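(* Let $T=(Q,\Sigma,\Delta,R,q_0)$ be a top-down tree transducer and let $A$ be the domain automaton of $T$. Let $S\neq\emptyset$ be a state of $A$ (i.e., a nonempty subset of $Q$). Then for every $s\in T_\Sigma$: $s\in\text{dom}(S)$ if and only if $s\in\bigcap_{q\in S}\text{dom}(q)$.
   Context: A top-down tree transducer $T=(Q,\Sigma,\Delta,R,q_0)$ has finite state set $Q$, ranked input/output alphabets $\Sigma,\Delta$, initial state $q_0$, and finite rule set $R$ of rules $q(a(x_1,\dots,x_k))\to t$ with $a\in\Sigma_k$ ($\Sigma_k$ = symbols of rank $k$) and $t$ a tree over $\Delta$ whose leaves may additionally be of the form $q'(x_i)$, $q'\in Q$, $i\in[k]$; rules are used as rewrite rules in the usual way. For a state $q$, $\text{dom}(q)$ is the set of $s\in T_\Sigma$ such that some tree over $\Delta$ is derivable from $q(s)$. A top-down tree automaton is a transducer with $\Sigma=\Delta$ all of whose rules have the form $p(a(x_1,\dots,x_k))\to a(p_1(x_1),\dots,p_k(x_k))$. For $q\in Q$ and $a\in\Sigma_k$, $\text{rhs}_T(q,a)$ is the set of right-hand sides of rules of $T$ with left-hand side $q(a(x_1,\dots,x_k))$. For a set $\Gamma$ of right-hand sides, $\Gamma[x_i]$ is the set of all $q'\in Q$ such that $q'(x_i)$ occurs in some tree of $\Gamma$. The domain automaton $A$ of $T$ is the top-down tree automaton over $\Sigma$ whose states are all subsets of $Q$, with initial state $\{q_0\}$, and with the following rules: for every $a\in\Sigma_k$, every nonempty $S=\{q_1,\dots,q_n\}\subseteq Q$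 and every choice of nonempty subsets $\Gamma_1\subseteq\text{rhs}_T(q_1,a),\dots,\Gamma_n\subseteq\text{rhs}_T(q_n,a)$, the rule $S(a(x_1,\dots,x_k))\to a(S_1(x_1),\dots,S_k(x_k))$ with $S_i=\bigcup_{j=1}^n\Gamma_j[x_i]$; and for every $a\in\Sigma_k$ the rule $\emptyset(a(x_1,\dots,x_k))\to a(\emptyset(x_1),\dots,\emptyset(x_k))$. For a state $S$ of $A$, $\text{dom}(S)$ is the set of trees $s$ from which (starting with $S(s)$) a tree over $\Sigma$ is derivable. *)

(* Defs.v *)
From Stdlib Require Import Relations List.
From mathcomp Require Import all_boot.

Set Implicit Arguments.
Unset Strict Implicit.
Unset Printing Implicit Defensive.

(** Ranked trees over an alphabet F (rank function supplied separately). *)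
Inductive tree (F : Type) : Type := Node : F -> seq (tree F) -> tree F.
Arguments Node {F}.

Inductive ranked (F : Type) (rk : F -> nat) : tree F -> Prop :=
| ranked_Node a ts : size ts = rk a ->
    (forall t, List.In t ts -> ranked rk t) -> ranked rk (Node a ts).

(** Right-hand sides of rules: trees over the output alphabet D whose leaves may
    be q'(x_i); the variable x_(i+1) is encoded by the index i (0-based). *)
Inductive rhs (P D : Type) : Type :=
| RD : D -> seq (rhs P D) -> rhs P D
| RQ : P -> nat -> rhs P D.
Arguments RD {P D}.
Arguments RQ {P D}.

Inductive rhs_ok (P D : Type) (rkD : D -> nat) (k : nat) : rhs P D -> Prop :=
| rhs_ok_D d rs : size rs = rkD d ->
    (forall r, List.In r rs -> rhs_ok rkD k r) -> rhs_ok rkD k (RD d rs)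
| rhs_ok_Q q i : i < k -> rhs_ok rkD k (RQ q i).

Inductive sform (P S D : Type) : Type :=
| SD : D -> seq (sform P S D) -> sform P S D
| SQ : P -> tree S -> sform P S D.
Arguments SD {P S D}.
Arguments SQ {P S D}.

Section Derivations.
Variables (P S D : Type).

(** Instantiate the rhs r of a rule applied at input tree t = a(s_1,...,s_k):
    every leaf q'(x_(i+1)) becomes q'(s_(i+1)).  (The fallback for an
    out-of-range variable is never used for legal rules, cf. rhs_ok.) *)
Fixpoint inst (t : tree S) (r : rhs P D) : sform P S D :=
  match r with
  | RD d rs => SD d (map (inst t) rs)
  | RQ q i => let: Node _ ss := t in
              match List.nth_error ss i with
              | Some si => SQ q si
              | None => SQ q t
              end
  end.

Fixpoint embed (t : tree D) : sform P S D :=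
  let: Node d ts := t in SD d (map embed ts).

(** One rewriting step with rule relation rl: rl q a r means that
    q(a(x_1,...,x_k)) -> r is a rule. *)
Inductive step (rl : P -> S -> rhs P D -> Prop) : sform P S D -> sform P S D -> Prop :=
| step_root q a ss r : rl q a r -> step rl (SQ q (Node a ss)) (inst (Node a ss) r)
| step_ctx d l x y rr : step rl x y -> step rl (SD d (l ++ x :: rr)) (SD d (l ++ y :: rr)).

Definition derives rl := clos_refl_trans (sform P S D) (step rl).

Definition domain rl (q : P) (s : tree S) : Prop :=
  exists t : tree D, derives rl (SQ q s) (embed t).

End Derivations.

(** Top-down tree transducer T = (Q, Sigma, Delta, R, q0) with finite Q;
    the finite rule set R is given by the finite lists rules q a = rhs_T(q,a). *)
Record tdt (Q : finType) (Sig Del : Type) := TDT {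
  rkI : Sig -> nat;
  rkO : Del -> nat;
  rules : Q -> Sig -> seq (rhs Q Del);
  q0 : Q
}.

Definition tdt_valid (Q : finType) Sig Del (T : tdt Q Sig Del) : Prop :=
  forall q a r, List.In r (rules T q a) -> rhs_ok (rkO T) (rkI T a) r.

Definition tdt_rule (Q : finType) Sig Del (T : tdt Q Sig Del) :
  Q -> Sig -> rhs Q Del -> Prop := fun q a r => List.In r (rules T q a).

Definition tdt_dom (Q : finType) Sig Del (T : tdt Q Sig Del) (q : Q) (s : tree Sig) :=
  domain (tdt_rule T) q s.

Fixpoint occ (Q : eqType) Del (q : Q) (i : nat) (r : rhs Q Del) : bool :=
  match r with
  | RD _ rs => has (occ q i) rs
  | RQ q' j => (q' == q) && (j == i)
  end.

(** For nonempty S and choices of nonempty Gamma_q ⊆ rhs_T(q,a) (q ∈ S):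
      S(a(x_1..x_k)) -> a(S_1(x_1),...,S_k(x_k)),  S_i = ⋃_{q∈S} Gamma_q[x_i];
    and ∅(a(x_1..x_k)) -> a(∅(x_1),...,∅(x_k)). *)
Definition dom_aut_rule (Q : finType) Sig Del (T : tdt Q Sig Del) :
  {set Q} -> Sig -> rhs {set Q} Sig -> Prop :=
  fun S a r =>
    (S = set0 /\ r = RD a [seq RQ set0 i | i <- iota 0 (rkI T a)])
    \/
    (S != set0 /\
     exists Gamma : Q -> seq (rhs Q Del),
       (forall q, q \in S ->
          Gamma q <> [::] /\ (forall g, List.In g (Gamma q) -> List.In g (rules T q a))) /\
       r = RD a [seq RQ [set q' | [exists q in S, has (occ q' i) (Gamma q)]] i
                | i <- iota 0 (rkI T a)]).

Definition aut_dom (Q : finType) Sig Del (T : tdt Q Sig Del) (S : {set Q}) (s : tree Sig) :=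
  domain (dom_aut_rule T) S s.

(* Main.v *)
Require Import Defs.
From Stdlib Require Import Relations List IndefiniteDescription.
From mathcomp Require Import all_boot.

Set Implicit Arguments.
Unset Strict Implicit.
Unset Printing Implicit Defensive.

Inductive F2 (A B : Type) (R : A -> B -> Prop) : seq A -> seq B -> Prop :=
| F2nil : F2 R [::] [::]
| F2cons x y xs ys : R x y -> F2 R xs ys -> F2 R (x :: xs) (y :: ys).

Lemma F2_refl A (R : A -> A -> Prop) xs : (forall x, R x x) -> F2 R xs xs.
Proof. move=> H; elim: xs => [|x xs IH]; constructor; auto. Qed.

Lemma F2_app A B (R : A -> B -> Prop) l1 l2 r1 r2 :
  F2 R l1 l2 -> F2 R r1 r2 -> F2 R (l1 ++ r1) (l2 ++ r2).
Proof. elim=> [|x y xs ys Hxy _ IH] //= Hr; constructor; auto. Qed.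

Lemma F2_trans A (R : A -> A -> Prop) xs ys zs :
  (forall x y z, R x y -> R y z -> R x z) -> F2 R xs ys -> F2 R ys zs -> F2 R xs zs.
Proof.
move=> Ht H; elim: H zs => [|x y xs' ys' Hxy _ IH] zs H2.
  by inversion H2; constructor.
inversion H2; subst; constructor; eauto.
Qed.

Lemma F2_In A B (R : A -> B -> Prop) xs ys x :
  F2 R xs ys -> In x xs -> exists y, In y ys /\ R x y.
Proof.
elim=> [|x0 y0 xs' ys' Hxy _ IH] //= [<-|Hin].
  by exists y0; split; [left|].
by have [y [Hy HR]] := IH Hin; exists y; split; [right|].
Qed.

Lemma In_map_inv A B (f : A -> B) l y : In y (map f l) -> exists x, In x l /\ y = f x.
Proof.
elim: l => [|a l IH] //= [<-|H]; first by exists a; split; [left|].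
by have [x [Hx ->]] := IH H; exists x; split; [right|].
Qed.

Lemma In_map A B (f : A -> B) l x : In x l -> In (f x) (map f l).
Proof. elim: l => [|a l IH] //= [<-|H]; [left|right; auto]; done. Qed.

Lemma has_In A (p : pred A) s : has p s <-> exists x, In x s /\ p x.
Proof.
elim: s => [|a s IH] /=; first by split=> // [[x []]].
split.
  case/orP=> [Ha|/IH [x [Hx Hp]]]; [exists a; split; [left|]|exists x; split; [right|]]; done.
move=> [x [[<-|Hx] Hp]]; apply/orP; [by left|right; apply/IH; exists x; done].
Qed.

Lemma nth_error_lt A (ss : seq A) i d : i < size ss -> nth_error ss i = Some (List.nth i ss d).
Proof. elim: ss i => [|a ss IH] [|i] //= H; apply: IH; done. Qed.

Lemma nth_In_lt A (ss : seq A) i d : i < size ss -> In (List.nth i ss d) ss.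
Proof. elim: ss i => [|a ss IH] [|i] //= H; [left|right; apply: IH]; done. Qed.


Lemma in_In (A : eqType) (x : A) s : x \in s -> In x s.
Proof. elim: s => [|a s IH] //=; rewrite inE; case/orP=> [/eqP ->|H]; [left|right; auto]; done. Qed.

Lemma In_in (A : eqType) (x : A) s : In x s -> x \in s.
Proof. elim: s => [|a s IH] //= [->|H]; rewrite inE ?eqxx //; apply/orP; right; auto. Qed.

Lemma rhs_ind2 (P D : Type) (Pr : rhs P D -> Prop)
  (HD : forall d rs, (forall r, In r rs -> Pr r) -> Pr (RD d rs))
  (HQ : forall q i, Pr (RQ q i)) : forall r, Pr r.
Proof.
refine (fix IH r := match r with
  | RD d rs => HD d rs ((fix go (l : seq (rhs P D)) : forall r, In r l -> Pr r :=
       match l with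
       | nil => fun r H => match H with end
       | cons r0 l' => fun r H => match H with
                                  | or_introl e => eq_ind r0 Pr (IH r0) r e
                                  | or_intror H' => go l' r H' end
       end) rs)
  | RQ q i => HQ q i end).
Qed.

Section Gen.
Variables (P S D : Type) (rl : P -> S -> rhs P D -> Prop).

Definition prd (x : sform P S D) := exists t : tree D, derives rl x (embed P S t).

Lemma derives_ctx d l r x y : derives rl x y ->
  derives rl (SD d (l ++ x :: r)) (SD d (l ++ y :: r)).
Proof.
elim=> [a b H|a|a b c _ H1 _ H2].
- by apply: rt_step; constructor.
- exact: rt_refl.
- exact: rt_trans H1 H2.
Qed.

Lemma derives_list d xs ys : F2 (derives rl) xs ys ->
  forall l, derives rl (SD d (l ++ xs)) (SD d (l ++ ys)).
Proof.
elim=> [|x y xs' ys' Hxy _ IH] l; first exact: rt_refl.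
apply: rt_trans (derives_ctx d l xs' Hxy) _.
have := IH (l ++ [:: y]); by rewrite -!catA.
Qed.

Lemma prdD_intro d xs : (forall x, In x xs -> prd x) -> prd (SD d xs).
Proof.
move=> H.
have [ts Hts] : exists ts, F2 (derives rl) xs (map (@embed P S D) ts).
  elim: xs H => [|x xs IH] H; first by exists [::]; constructor.
  have [t Ht] := H x (or_introl erefl).
  have [ts Hts] := IH (fun y Hy => H y (or_intror Hy)).
  by exists (t :: ts); constructor.
exists (Node d ts); exact: (derives_list d Hts [::]).
Qed.

Lemma derives_SD_inv x y : derives rl x y -> forall d xs, x = SD d xs ->
  exists ys, y = SD d ys /\ F2 (derives rl) xs ys.
Proof.
elim=> [a b H|a|a b c _ IH1 _ IH2] d xs E.
- subst a; inversion H; subst.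
  exists (l ++ y0 :: rr); split=> //.
  apply: F2_app; first by apply: F2_refl => z; apply: rt_refl.
  constructor; first by apply: rt_step.
  by apply: F2_refl => z; apply: rt_refl.
- by exists xs; split=> //; apply: F2_refl => z; apply: rt_refl.
- have [ys [E1 H1]] := IH1 d xs E.
  have [zs [E2 H2]] := IH2 d ys E1.
  exists zs; split=> //; apply: F2_trans H1 H2 => ???; apply: rt_trans.
Qed.

Lemma prdD_elim d xs : prd (SD d xs) -> forall x, In x xs -> prd x.
Proof.
move=> [[d' ts] H] x Hx.
have [ys [E HF]] := derives_SD_inv H erefl.
case: E => _ E; subst ys.
have [y [Hy Hxy]] := F2_In HF Hx.
have [t [_ Et]] := In_map_inv Hy.
by exists t; rewrite -Et.
Qed.

Lemma prdQ_elim q a ss : prd (SQ q (Node a ss)) ->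
  exists r, rl q a r /\ prd (inst (Node a ss) r).
Proof.
move=> [t Ht]; have H := clos_rt_rt1n _ _ _ _ Ht.
inversion H as [E|]; first by move: E; case: t {Ht H}.
match goal with Hs : step _ _ _ |- _ => inversion Hs; subst end.
eexists; split; first eassumption.
by exists t; apply: clos_rt1n_rt.
Qed.

Lemma prdQ_intro q a ss r : rl q a r -> prd (inst (Node a ss) r) ->
  prd (SQ q (Node a ss)).
Proof.
move=> Hr [t Ht]; exists t; apply: rt_trans Ht.
by apply: rt_step; constructor.
Qed.

End Gen.

Lemma prod_inst (P : eqType) S D (rl : P -> S -> rhs P D -> Prop) t (r : rhs P D) :
  prd rl (inst t r) <-> (forall q i, occ q i r -> prd rl (inst t (RQ q i))).
Proof.
elim/rhs_ind2: r => [d rs IH|q' j] /=.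
  split.
  - move=> H q i /has_In [r [Hr Ho]].
    apply: (proj1 (IH r Hr)) Ho; apply: (prdD_elim H); exact: In_map.
  - move=> H; apply: prdD_intro => x Hx.
    have [r [Hr ->]] := In_map_inv Hx.
    apply/(IH r Hr) => q i Ho; apply: H; apply/has_In; by exists r.
split; first by move=> H q i /andP [/eqP <- /eqP <-].
by move=> H; apply: H; rewrite !eqxx.
Qed.

Lemma occ_ok (P : eqType) D (rkD : D -> nat) k (r : rhs P D) q i :
  rhs_ok rkD k r -> occ q i r -> i < k.
Proof.
elim/rhs_ind2: r => [d rs IH|q' j] H; inversion H; subst => /=.
  move=> /has_In [r [Hr Ho]]; apply: (IH r Hr) Ho; auto.
by move=> /andP [_ /eqP <-].
Qed.

Section Main.
Variables (Q : finType) (Sig Del : Type) (T : tdt Q Sig Del).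
Hypothesis HT : tdt_valid T.

Lemma inst_RQ P D a ss (q : P) i : i < size ss ->
  @inst P Sig D (Node a ss) (RQ q i) = SQ q (List.nth i ss (Node a ss)).
Proof. by move=> H /=; rewrite (nth_error_lt (Node a ss) H). Qed.


Lemma occ_autE (a : Sig) (Sf : nat -> {set Q}) k q i :
  occ q i (RD a [seq RQ (Sf j) j | j <- iota 0 k]) = (i < k) && (q == Sf i).
Proof.
rewrite /= has_map.
apply/hasP/andP.
  move=> [j]; rewrite mem_iota /= => Hj /andP [/eqP <- /eqP Ej]; subst j.
  by split=> //.
move=> [Hi /eqP ->]; exists i; first by rewrite mem_iota.
by rewrite /= !eqxx.
Qed.

Lemma aut_set0 s : ranked (rkI T) s -> prd (dom_aut_rule T) (SQ set0 s).
Proof.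
elim=> a ss Hsz _ IH.
apply: (@prdQ_intro _ _ _ _ _ _ _ (RD a [seq RQ set0 i | i <- iota 0 (rkI T a)])).
  by left.
apply/prod_inst => q i.
rewrite (occ_autE a (fun _ => set0)) => /andP [Hi /eqP ->].
rewrite -Hsz in Hi; rewrite inst_RQ //.
apply: IH; exact: nth_In_lt.
Qed.

Lemma main s : ranked (rkI T) s -> forall S : {set Q}, S != set0 ->
  (prd (dom_aut_rule T) (SQ S s) <-> forall q, q \in S -> prd (tdt_rule T) (SQ q s)).
Proof.
elim=> a ss Hsz Hrk IH S HS.
set ch := fun i => List.nth i ss (Node a ss).
have Hch : forall i, i < rkI T a -> In (ch i) ss.
  by move=> i Hi; apply: nth_In_lt; rewrite Hsz.
split.
- move=> Hpr; have [r [Hr Hp]] := prdQ_elim Hpr.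
  case: Hr => [[ES _]|[_ [Gamma [HG Er]]]]; first by rewrite ES eqxx in HS.
  set Sf := fun i => [set q' | [exists q in S, has (occ q' i) (Gamma q)]] in Er.
  subst r.
  have HSf : forall i, i < rkI T a -> prd (dom_aut_rule T) (SQ (Sf i) (ch i)).
    move=> i Hi.
    have := (proj1 (prod_inst _ _ _) Hp (Sf i) i).
    rewrite occ_autE Hi eqxx inst_RQ ?Hsz //; by apply.
  move=> q Hq.
  have [HGn HGr] := HG q Hq.
  case EG: (Gamma q) HGn => [|g gs] // _.
  have Hg : In g (Gamma q) by rewrite EG; left.
  apply: (@prdQ_intro _ _ _ _ _ _ _ g); first exact: HGr.
  apply/prod_inst => q' i Ho.
  have Hi : i < rkI T a by apply: occ_ok Ho; apply: HT; apply: HGr.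
  rewrite inst_RQ ?Hsz //.
  have Hq' : q' \in Sf i.
    rewrite inE; apply/existsP; exists q; rewrite Hq /=.
    apply/has_In; by exists g.
  have HSfn : Sf i != set0 by apply/set0Pn; exists q'.
  by apply: (proj1 (IH _ (Hch i Hi) _ HSfn) (HSf i Hi)).
- move=> H.
  have Hc : forall q, exists l : seq (rhs Q Del), q \in S -> exists r, l = [:: r] /\
      In r (rules T q a) /\ prd (tdt_rule T) (inst (Node a ss) r).
    move=> q; case: (boolP (q \in S)) => Hq; last by exists [::].
    have [r [Hr Hp]] := prdQ_elim (H q Hq).
    by exists [:: r] => _; exists r.
  have [Gamma HGamma] := functional_choice _ Hc.
  set Sf := fun i => [set q' | [exists q in S, has (occ q' i) (Gamma q)]].
  apply: (@prdQ_intro _ _ _ _ _ _ _ (RD a [seq RQ (Sf i) i | i <- iota 0 (rkI T a)])).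
    right; split=> //; exists Gamma; split=> // q Hq.
    have [r [-> [Hr _]]] := HGamma q Hq.
    by split=> // g [<-|[]].
  apply/prod_inst => q i; rewrite occ_autE => /andP [Hi /eqP ->].
  rewrite inst_RQ ?Hsz //.
  case: (eqVneq (Sf i) set0) => [E|HSfn].
    rewrite E; apply: aut_set0; apply: Hrk; exact: Hch.
  apply/(IH _ (Hch i Hi) _ HSfn) => q'.
  rewrite inE => /existsP [q0 /andP [Hq0 Ho]].
  have [r [Er [Hr Hp]]] := HGamma q0 Hq0.
  rewrite Er /= orbF in Ho.
  have := proj1 (prod_inst _ _ _) Hp q' i Ho.
  by rewrite inst_RQ ?Hsz.
Qed.

End Main.

Theorem lemma1 (Q : finType) (Sig Del : Type) (T : tdt Q Sig Del) :
  tdt_valid T ->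
  forall S : {set Q}, S != set0 ->
  forall s : tree Sig, ranked (rkI T) s ->
    (aut_dom T S s <-> (forall q, q \in S -> tdt_dom T q s)).
Proof.
move=> HT S HS s Hs; exact: (main HT Hs HS).
Qed.
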